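(* Let $n\ge2$, $N,M\ge1$, let $\Lambda$ be a positive definite diagonal $n\times n$ matrix, let $\overline Q^1_0,\dots,\overline Q^M_0\in SO(n)$, and let $\phi:\mathbb{R}^{n\times n}\to[0,\infty)$ be smooth. Consider the problem of minimizing $$\hat V(U_0,\dots,U_{N-1})=\sum_{k=0}^{N-1}\operatorname{trace}(\Lambda U_k)+\sum_{a=1}^M\phi(Q^a_N)$$ over $U_0,\dots,U_{N-1}\in SO(n)$, where $Q^a_0=\overline Q^a_0$ and $Q^a_{k+1}=Q^a_kU_k$ for $k=0,\dots,N-1$, $a=1,\dots,M$. If $(U_0,\dots,U_{N-1})$ is a (local) minimizer, then there exist real $n\times n$ matrices $P^a_k$ ($a=1,\dots,M$, $k=0,\dots,N$) such that for all $a$ and $k=0,\dots,N-1$: $$Q^a_{k+1}=Q^a_kU_k,\qquad P^a_{k+1}=P^a_kU_k,\qquad U_k\Lambda-\Lambda U_k^T=\sum_{a=1}^M\big((Q^a_k)^TP^a_k-(P^a_k)^TQ^a_k\big),$$ and $P^a_N=\nabla\phi(Q^a_N)$ for all $a$.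
   Context: $SO(n)$ is the group of real orthogonal $n\times n$ matrices of determinant $1$; $A^T$ is the transpose. $\nabla\phi(A)$ is the Euclidean (Frobenius) gradient of $\phi$ at $A\in\mathbb{R}^{n\times n}$, i.e. the matrix with entries $\partial\phi/\partial A_{ij}$, so that $\frac{d}{d\epsilon}\big|_{0}\phi(A+\epsilon B)=\operatorname{trace}(\nabla\phi(A)^TB)$. *)

(* Defs.v *)
From HB Require Import structures.
From mathcomp Require Import all_boot all_order all_algebra.
From mathcomp Require Import all_classical all_reals all_analysis.
Set Implicit Arguments. Unset Strict Implicit. Unset Printing Implicit Defensive.
Import Order.TTheory GRing.Theory Num.Theory.
Import numFieldNormedType.Exports.
Local Open Scope ring_scope.

Definition SOmx (R : realType) (n : nat) : pred 'M[R]_n :=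
  [pred A : 'M[R]_n | (A^T *m A == 1%:M) && (\det A == 1)].

Arguments SOmx : clear implicits.

Fixpoint iter_dir (R : realType) (n : nat) (vs : seq 'M[R]_n)
    (f : 'M[R]_n -> R) : 'M[R]_n -> R :=
  match vs with
  | [::] => f
  | v :: vs' => fun x => 'D_v (iter_dir vs' f) x
  end.

Definition smooth_fun (R : realType) (n : nat) (f : 'M[R]_n -> R) : Prop :=
  forall vs : seq 'M[R]_n,
    continuous (iter_dir vs f) /\
    forall (v x : 'M[R]_n), derivable (iter_dir vs f) x v.

Definition grad (R : realType) (n : nat) (phi : 'M[R]_n -> R) (A : 'M[R]_n)
  : 'M[R]_n := \matrix_(i, j) 'D_(delta_mx i j) phi A.

(* controls extended by the identity outside 0..N-1 *)
Definition ctrl (R : realType) (n N : nat) (U : 'I_N -> 'M[R]_n) (k : nat)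
  : 'M[R]_n := oapp U 1%:M (insub k).

Fixpoint traj (R : realType) (n N : nat) (Q0 : 'M[R]_n)
    (U : 'I_N -> 'M[R]_n) (k : nat) : 'M[R]_n :=
  match k with
  | 0 => Q0
  | k'.+1 => traj Q0 U k' *m ctrl U k'
  end.

Definition Vhat (R : realType) (n N M : nat) (Lam : 'M[R]_n)
    (phi : 'M[R]_n -> R) (Q0 : 'I_M -> 'M[R]_n) (U : 'I_N -> 'M[R]_n) : R :=
  \sum_(k < N) \tr (Lam *m U k) + \sum_(a < M) phi (traj (Q0 a) U N).

(* local minimizer over SO(n)^N (neighbourhood w.r.t. the matrix sup norm) *)
Definition local_min_SO (R : realType) (n N M : nat) (Lam : 'M[R]_n)
    (phi : 'M[R]_n -> R) (Q0 : 'I_M -> 'M[R]_n) (U : 'I_N -> 'M[R]_n) : Prop :=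
  (forall k, U k \in SOmx R n) /\
  exists2 eps : R, 0 < eps &
    forall W : 'I_N -> 'M[R]_n,
      (forall k, W k \in SOmx R n) ->
      (forall k, `|W k - U k| < eps) ->
      Vhat Lam phi Q0 U <= Vhat Lam phi Q0 W.

(* Main.v *)
Require Import Defs.
From HB Require Import structures.
From mathcomp Require Import all_boot all_order all_algebra.
From mathcomp Require Import all_classical all_reals all_analysis.
From mathcomp Require Import ring lra.
Import Order.TTheory GRing.Theory Num.Theory.
Import numFieldNormedType.Exports.
Local Open Scope ring_scope.
Set Implicit Arguments. Unset Strict Implicit. Unset Printing Implicit Defensive.



Section An.
Variables (R : realType) (n : nat).
Implicit Types (f : 'M[R]_n -> R) (A v w : 'M[R]_n).

Lemma cont_eps f A : {for A, continuous f} ->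
  forall e : R, 0 < e -> exists2 d : R, 0 < d & forall x, `|A - x| < d -> `|f A - f x| < e.
Proof.
move=> /cvgrPdist_lt H e e0; have := H e e0.
by move=> /nbhs_normP [d /= d0 hd]; exists d => // x hx; exact: hd.
Qed.

Lemma D_unique f A z (L : R) :
  (forall e : R, 0 < e -> exists2 d : R, 0 < d & forall t : R, `|t| < d ->
     `|f (A + t *: z) - f A - t * L| <= e * `|t|) -> 'D_z f A = L.
Proof.
move=> H; rewrite /derive; apply: cvg_lim => //.
apply/cvgrPdist_le => e e0; have [d d0 hd] := H e e0.
rewrite near_withinE; apply/nbhs_normP; exists d => //= t /= ht tn0.
rewrite sub0r normrN in ht.
have := hd t ht; rewrite /= addrC.
rewrite [t *: z + A]addrC; set X := (f _ - f A).
have -> : L - t^-1 *: X = - t^-1 * (- (t * L) + X).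
  rewrite -[t^-1 *: X]/(t^-1 * X); by field.
rewrite normrM normrN normfV => h.
by rewrite mulrC ler_pdivrMr ?normr_gt0 // mulrC.
Qed.


Lemma line_isd f A w x : derivable f (A + x *: w) w ->
  is_derive x 1 (fun s : R => f (A + s *: w)) ('D_w f (A + x *: w)).
Proof.
move=> dfw.
have E : (fun h : R => h^-1 *: (((fun s : R => f (A + s *: w)) \o shift x) (h *: 1)
          - (fun s : R => f (A + s *: w)) x))
       = (fun h : R => h^-1 *: ((f \o shift (A + x *: w)) (h *: w) - f (A + x *: w))).
  apply/funext => h /=; congr (_ *: (f _ - _)).
  by rewrite scalerDl -[h *: 1]/(h * 1) mulr1 addrCA.
split; first by rewrite /derivable E.
by rewrite /derive E.
Qed.

Lemma mvt_line f A w u : (forall x, derivable f x w) ->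
  exists2 eta : R, `|eta| <= `|u| & f (A + u *: w) - f A = u * 'D_w f (A + eta *: w).
Proof.
move=> dfw.
set g := fun s : R => f (A + s *: w).
have gd : forall x : R, is_derive x (1:R) g ('D_w f (A + x *: w)) by move=> x; exact: line_isd.
have gc : continuous g.
  move=> x; apply: differentiable_continuous; apply/derivable1_diffP.
  by have [] := gd x.
have gA : g 0 = f A by rewrite /g scale0r addr0.
case: (leP 0 u) => hu.
- have [c hc E] := MVT_segment hu (fun x _ => gd x) (continuous_subspaceT gc).
  exists c; last by rewrite -gA /g E subr0 mulrC.
  move: hc; rewrite in_itv /= => /andP[c0 cu].
  by rewrite !ger0_norm // (le_trans c0 cu).
- have [c hc E] := MVT_segment (ltW hu) (fun x _ => gd x) (continuous_subspaceT gc).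
  exists c; last first.
    rewrite -gA /g; apply: (@oppr_inj R); rewrite opprB -/(g u) -/(g 0) E.
    by rewrite sub0r mulrN mulrC.
  move: hc; rewrite in_itv /= => /andP[uc c0].
  by rewrite !ler0_norm ?lerN2 // (le_trans (ltW hu)).
Qed.


Lemma est2 f A v w : (forall x z, derivable f x z) ->
  {for A, continuous ('D_v f)} -> {for A, continuous ('D_w f)} ->
  forall e : R, 0 < e -> exists2 d : R, 0 < d & forall s u : R, `|s| < d -> `|u| < d ->
  `|f (A + s *: v + u *: w) - f A - s * 'D_v f A - u * 'D_w f A| <= e * (`|s| + `|u|).
Proof.
move=> df cv cw e e0.
have [d1 d10 h1] := cont_eps cv e0.
have [d2 d20 h2] := cont_eps cw e0.
set K := `|v| + `|w| + 1.
have K0 : 0 < K by rewrite /K ltr_wpDl // addr_ge0.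
have m0 : 0 < Num.min d1 d2 by rewrite lt_min d10 d20.
exists (Num.min d1 d2 / K); first by rewrite divr_gt0.
move=> s u hs hu.
have [eta heta E1] := mvt_line (A + s *: v) u (fun x => df x w).
have [xi hxi E2] := mvt_line A s (fun x => df x v).
move/eqP: E1; rewrite subr_eq => /eqP ->.
move/eqP: E2; rewrite subr_eq => /eqP ->.
set Dw := 'D_w f _; set Dv := 'D_v f _.
have key : forall a b : R, `|a| < Num.min d1 d2 / K -> `|b| < Num.min d1 d2 / K ->
    `|a *: v + b *: w| < Num.min d1 d2.
  move=> a b ha hb.
  apply: (le_lt_trans (ler_normD _ _)); rewrite !normrZ.
  have hK : Num.min d1 d2 = Num.min d1 d2 / K * K by rewrite divfK // gt_eqF.
  rewrite [X in _ < X]hK /K mulrDr mulr1 mulrDr.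
  have : `|a| * `|v| <= Num.min d1 d2 / K * `|v| by rewrite ler_wpM2r // ltW.
  have : `|b| * `|w| <= Num.min d1 d2 / K * `|w| by rewrite ler_wpM2r // ltW.
  have : 0 < Num.min d1 d2 / K by rewrite divr_gt0.
  lra.
have hDw : `|Dw - 'D_w f A| < e.
  rewrite distrC; apply: h2; rewrite -addrA opprD addrA subrr sub0r normrN.
  apply: (lt_le_trans (key _ _ _ _)); last by rewrite ge_min lexx orbT.
    by []. exact: le_lt_trans heta hu.
have hDv : `|Dv - 'D_v f A| < e.
  rewrite distrC; apply: h1; rewrite opprD addrA subrr sub0r normrN.
  rewrite -[xi *: v]addr0 -(scale0r w).
  apply: (lt_le_trans (key _ _ _ _)); last by rewrite ge_min lexx.
    exact: le_lt_trans hxi hs.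
  by rewrite normr0 divr_gt0.
have -> : u * Dw + (s * Dv + f A) - f A - s * 'D_v f A - u * 'D_w f A
        = u * (Dw - 'D_w f A) + s * (Dv - 'D_v f A) by ring.
apply: (le_trans (ler_normD _ _)); rewrite !normrM.
have := normr_ge0 u; have := normr_ge0 s.
nra.
Qed.


Section Lin.
Variable f : 'M[R]_n -> R.
Hypothesis df : forall x z, derivable f x z.
Hypothesis cf : forall z, continuous ('D_z f).

Lemma D_add A v w : 'D_(v + w) f A = 'D_v f A + 'D_w f A.
Proof.
apply: D_unique => e e0.
have [d d0 hd] := est2 df (@cf v A) (@cf w A) (divr_gt0 e0 (ltr0Sn R 1)).
exists d => // t ht.
have := hd t t ht ht.
rewrite scalerDr addrA => h.
have -> : f (A + t *: v + t *: w) - f A - t * ('D_v f A + 'D_w f A)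
  = f (A + t *: v + t *: w) - f A - t * 'D_v f A - t * 'D_w f A by ring.
apply: (le_trans h); rewrite le_eqVlt; apply/orP; left; apply/eqP; by field.
Qed.

Lemma D_scale A c v : 'D_(c *: v) f A = c * 'D_v f A.
Proof.
apply: D_unique => e e0.
have c1 : 0 < `|c| + 1 by rewrite ltr_wpDl.
have [d d0 hd] := est2 df (@cf v A) (@cf v A) (divr_gt0 e0 c1).
exists (d / (`|c| + 1)); first by rewrite divr_gt0.
move=> t ht.
have hct : `|c * t| < d.
  rewrite normrM; apply: (le_lt_trans (y := (`|c| + 1) * `|t|)).
    by rewrite ler_wpM2r // lerDl.
  by rewrite mulrC -ltr_pdivlMr.
have h0 : `|0 : R| < d by rewrite normr0.
have := hd (c * t) 0 hct h0.
rewrite scale0r addr0 mul0r subr0 scalerA [t * c]mulrC => h.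
have -> : t * (c * 'D_v f A) = c * t * 'D_v f A by ring.
apply: (le_trans h).
rewrite normr0 addr0 normrM.
have := normr_ge0 t; have := normr_ge0 c.
move=> hc ht0.
rewrite mulrA ler_wpM2r //.
by rewrite mulrAC ler_pdivrMr // ler_wpM2l ?(ltW e0) // lerDl.
Qed.

Lemma D_sum (I : Type) (r : seq I) (P : pred I) (F : I -> 'M[R]_n) A :
  'D_(\sum_(i <- r | P i) F i) f A = \sum_(i <- r | P i) 'D_(F i) f A.
Proof.
exact: (big_morph (fun z => 'D_z f A) (fun v w => D_add A v w) (derive0 f A)).
Qed.

Lemma D_grad A B : 'D_B f A = \tr ((grad f A)^T *m B).
Proof.
rewrite {1}(matrix_sum_delta B) D_sum.
rewrite /mxtrace; under eq_bigr => i _ do rewrite D_sum.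
rewrite exchange_big; apply: eq_bigr => j _; rewrite mxE; apply: eq_bigr => i _.
by rewrite D_scale !mxE mulrC.
Qed.

End Lin.

End An.



Section Traj.
Variables (R : realType) (n N : nat).
Implicit Types (U V : 'I_N -> 'M[R]_n) (X : 'M[R]_n).

Fixpoint Pr U (p m : nat) : 'M[R]_n :=
  match m with 0 => 1%:M | m'.+1 => Pr U p m' *m ctrl U (p + m') end.

Lemma PrSl U p m : Pr U p m.+1 = ctrl U p *m Pr U p.+1 m.
Proof.
elim: m => [|m IH]; first by rewrite /= addn0 mulmx1 mul1mx.
change (Pr U p m.+1 *m ctrl U (p + m.+1) = ctrl U p *m (Pr U p.+1 m *m ctrl U (p.+1 + m))).
by rewrite IH -mulmxA addSnnS.
Qed.

Lemma traj_add Q0 U p m : traj Q0 U (p + m) = traj Q0 U p *m Pr U p m.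
Proof.
elim: m => [|m IH]; first by rewrite addn0 /= mulmx1.
by rewrite addnS /= IH mulmxA.
Qed.

Lemma ctrl_ord U (k : 'I_N) : ctrl U k = U k.
Proof. by rewrite /ctrl valK. Qed.

Definition Umod U (k : 'I_N) X : 'I_N -> 'M[R]_n :=
  fun l => if l == k then U k *m X else U l.

Lemma ctrl_mod U k X j : ctrl (Umod U k X) j = if j == val k then U k *m X else ctrl U j.
Proof.
rewrite /ctrl; case: insubP => [l _ <-|/negbTE hj] /=.
  by rewrite /Umod.
case: eqP => // ej; move: hj; by rewrite ej ltn_ord.
Qed.

Lemma traj_eq Q0 U V p : (forall j, (j < p)%N -> ctrl U j = ctrl V j) ->
  traj Q0 U p = traj Q0 V p.
Proof.
elim: p => [|p IH] H //=.
by rewrite IH ?H // => j hj; apply: H; exact: ltnW.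
Qed.

Lemma Pr_eq U V p m : (forall j, (p <= j)%N -> ctrl U j = ctrl V j) ->
  Pr U p m = Pr V p m.
Proof.
move=> H; elim: m => [|m IH] //=.
by rewrite IH H // leq_addr.
Qed.

Lemma traj_mod Q0 U (k : 'I_N) X :
  traj Q0 (Umod U k X) N = traj Q0 U k *m (U k *m X) *m Pr U k.+1 (N - k.+1).
Proof.
have hk : (k.+1 <= N)%N := ltn_ord k.
have -> : traj Q0 (Umod U k X) N = traj Q0 (Umod U k X) (k.+1 + (N - k.+1)) by rewrite subnKC.
rewrite traj_add /= ctrl_mod eqxx.
rewrite (@traj_eq _ _ U); last by move=> j hj; rewrite ctrl_mod (ltn_eqF hj).
rewrite (@Pr_eq _ U) // => j hj; rewrite ctrl_mod.
by case: eqP => // ej; move: hj; rewrite ej ltnn.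
Qed.

Lemma traj_N Q0 U (k : 'I_N) :
  traj Q0 U N = traj Q0 U k *m U k *m Pr U k.+1 (N - k.+1).
Proof.
have hk : (k.+1 <= N)%N := ltn_ord k.
have -> : traj Q0 U N = traj Q0 U (k.+1 + (N - k.+1)) by rewrite subnKC.
by rewrite traj_add /= ctrl_ord.
Qed.

End Traj.



Section Rot.
Variables (R : realType) (n : nat) (S D : 'M[R]_n).
Hypotheses (StN : S^T = - S) (DtD : D^T = D) (SS : S *m S = - D) (SD : S *m D = S)
  (DS : D *m S = S) (DD : D *m D = D).

Definition Tm (a c : R) : 'M[R]_n := 1%:M + a *: S + c *: D.

Lemma Tm_mul (a b c d : R) : Tm a c *m Tm b d =
  1%:M + (a + b + a * d + c * b) *: S + (c + d - a * b + c * d) *: D.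
Proof.
rewrite /Tm !mulmxDl !mulmxDr !mul1mx !mulmx1 -!scalemxAl -!scalemxAr !scalerA.
rewrite SS SD DS DD.
apply/matrixP => p q; rewrite !mxE; ring.
Qed.

Lemma Tm_tr a c : (Tm a c)^T = Tm (- a) c.
Proof. by rewrite /Tm !linearD /= !linearZ /= trmx1 StN DtD scalerN scaleNr. Qed.

Lemma Tm_orth a c : (1 + c) ^+ 2 + a ^+ 2 = 1 -> (Tm a c)^T *m Tm a c = 1%:M.
Proof.
move=> h; rewrite Tm_tr Tm_mul.
have -> : - a + a + - a * c + c * a = 0 by ring.
have -> : c + c - - a * a + c * c = 0.
  have -> : c + c - - a * a + c * c = (1 + c) ^+ 2 + a ^+ 2 - 1 by ring.
  by rewrite h subrr.
by rewrite !scale0r !addr0.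
Qed.

Lemma Tm_SO a c : (1 + c) ^+ 2 + a ^+ 2 = 1 ->
  Tm a c *m Tm a c \in SOmx R n.
Proof.
move=> h; have o := Tm_orth h.
have dT : \det (Tm a c) * \det (Tm a c) = 1.
  by rewrite -{1}det_tr -det_mulmx o det1.
rewrite inE; apply/andP; split; last by rewrite det_mulmx dT.
by rewrite trmx_mul mulmxA -(mulmxA _ (Tm a c)^T) o mulmx1 o.
Qed.

End Rot.

Section Delta.
Variables (R : realType) (n : nat) (i j : 'I_n).
Hypothesis hij : i != j.
Definition Sm : 'M[R]_n := delta_mx i j - delta_mx j i.
Definition Dm : 'M[R]_n := delta_mx i i + delta_mx j j.
Let hji : j != i. Proof. by rewrite eq_sym. Qed.

Lemma Sm_tr : Sm^T = - Sm.
Proof. by rewrite /Sm linearB /= !trmx_delta opprB. Qed.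
Lemma Dm_tr : Dm^T = Dm.
Proof. by rewrite /Dm linearD /= !trmx_delta. Qed.
Lemma Sm_Sm : Sm *m Sm = - Dm.
Proof.
rewrite /Sm /Dm !mulmxBl !mulmxBr !mul_delta_mx_cond !eqxx (negPf hij) (negPf hji).
by rewrite !mulr0n !mulr1n sub0r subr0 opprD addrC.
Qed.
Lemma Sm_Dm : Sm *m Dm = Sm.
Proof.
rewrite /Sm /Dm !mulmxBl !mulmxDr !mul_delta_mx_cond !eqxx (negPf hij) (negPf hji).
by rewrite !mulr0n !mulr1n addr0 add0r.
Qed.
Lemma Dm_Sm : Dm *m Sm = Sm.
Proof.
rewrite /Sm /Dm !mulmxDl !mulmxBr !mul_delta_mx_cond !eqxx (negPf hij) (negPf hji).
by rewrite !mulr0n !mulr1n !subr0 sub0r.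
Qed.
Lemma Dm_Dm : Dm *m Dm = Dm.
Proof.
rewrite /Dm !mulmxDl !mulmxDr !mul_delta_mx_cond !eqxx (negPf hij) (negPf hji).
by rewrite !mulr0n !mulr1n addr0 add0r.
Qed.
End Delta.



Lemma neg_contra (R : realType) (F : R -> R -> R) (F0 L1 L2 t0 : R) :
  0 < t0 ->
  (forall e : R, 0 < e -> exists2 d : R, 0 < d & forall s u : R, `|s| < d -> `|u| < d ->
     `|F s u - F0 - s * L1 - u * L2| <= e * (`|s| + `|u|)) ->
  (forall a c : R, 0 < a -> a < t0 -> (1 + c) ^+ 2 + a ^+ 2 = 1 -> 0 <= 1 + c ->
     F0 <= F (a + a + a * c + c * a) (c + c - a * a + c * c)) ->
  0 <= L1.
Proof.
move=> t00 H Hmin; rewrite leNgt; apply/negP => L1n.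
set e := - L1 / 4.
have e0 : 0 < e by rewrite /e divr_gt0 // oppr_gt0.
have [d d0 hd] := H e e0.
set K := `|L2| + e.
have K0 : 0 < K by rewrite /K ltr_wpDl.
have K1 : 0 < 8 * K + 1 by rewrite ltr_wpDl // mulr_ge0 // ltW.
set a := Num.min (Num.min (t0 / 2) (d / 4)) (Num.min (1 / 2) (- L1 / (8 * K + 1))).
have a0 : 0 < a.
  rewrite /a !lt_min !divr_gt0 //= ?oppr_gt0 //.
have at0 : a <= t0 / 2 by rewrite /a !ge_min lexx.
have ad : a <= d / 4 by rewrite /a !ge_min lexx orbT.
have ah : a <= 1 / 2 by rewrite /a !ge_min lexx !orbT.
have aL : a <= - L1 / (8 * K + 1) by rewrite /a !ge_min lexx !orbT.
have aL' : a * (8 * K + 1) <= - L1 by rewrite -ler_pdivlMr.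
have a2 : 0 <= 1 - a ^+ 2 by nra.
set sq := Num.sqrt (1 - a ^+ 2).
have sq0 : 0 <= sq := sqrtr_ge0 _.
have sq2 : sq ^+ 2 = 1 - a ^+ 2 by rewrite sqr_sqrtr.
set c := sq - 1.
have hc : (1 + c) ^+ 2 + a ^+ 2 = 1.
  have -> : 1 + c = sq by rewrite /c; ring.
  by rewrite sq2 subrK.
have hc0 : 0 <= 1 + c by rewrite /c addrC subrK.
have at1 : a < t0 by lra.
have := Hmin a c a0 at1 hc hc0.
have -> : a + a + a * c + c * a = 2 * a * sq by rewrite /c; ring.
have -> : c + c - a * a + c * c = - 2 * a ^+ 2.
  have -> : c + c - a * a + c * c = (1 + c) ^+ 2 - 1 - a ^+ 2 by ring.
  nra.
move=> hmin.
have sqh : 1 / 2 <= sq by nra.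
have sq1 : sq <= 1 by nra.
have hs : `|2 * a * sq| < d.
  rewrite ger0_norm; last by nra.
  nra.
have hu : `|- 2 * a ^+ 2| < d.
  rewrite ler0_norm; last by nra.
  nra.
have := hd _ _ hs hu.
have ns : `|2 * a * sq| = 2 * a * sq by rewrite ger0_norm //; nra.
have nu : `|- 2 * a ^+ 2| = 2 * a ^+ 2 by rewrite ler0_norm; [ring | nra].
rewrite ns nu => h0; have h := le_trans (ler_norm _) h0.
have hL2 : - `|L2| <= L2 by rewrite lerNl ler_normr lexx orbT.
have hL2' : - (2 * a ^+ 2) * L2 <= 2 * a ^+ 2 * `|L2|.
  rewrite mulNr lerNl -mulrN; apply: ler_wpM2l; first by nra.
  exact: hL2.
have : 2 * a * sq * L1 <= 2 * a * (1/2) * L1.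
  rewrite -!mulrA; do 2 (apply: ler_wpM2l; first by nra).
  rewrite mul1r; apply: (ler_wnM2r (ltW L1n)); rewrite -div1r; exact: sqh.
rewrite /K /e in aL' h hL2'.
nra.
Qed.



Lemma fin_delta (R : realType) (I : finType) (P : I -> R -> Prop) :
  (forall i d d', 0 < d' -> d' <= d -> P i d -> P i d') ->
  (forall i, exists2 d, 0 < d & P i d) -> exists2 d : R, 0 < d & forall i, P i d.
Proof.
move=> mono H.
have /choice [dd hdd] : forall i, exists d, 0 < d /\ P i d.
  by move=> i; have [d ? ?] := H i; exists d.
have pos : 0 < \big[Num.min/1]_i dd i.
  by elim/big_ind: _ => // [x y ? ?|i _]; [rewrite lt_min; apply/andP | exact: (hdd i).1].
exists (\big[Num.min/1]_i dd i) => // i.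
by apply: (mono i (dd i)) => //; [exact: bigmin_le | exact: (hdd i).2].
Qed.

Lemma tr_delta (R : realType) n (X : 'M[R]_n) i j : \tr (X *m delta_mx i j) = X j i.
Proof.
rewrite /mxtrace (bigD1 j) //= big1 ?addr0.
  rewrite mxE (bigD1 i) //= big1 ?addr0; first by rewrite mxE !eqxx mulr1.
  by move=> q hq; rewrite mxE (negPf hq) mulr0.
move=> p hp; rewrite mxE big1 // => q _; by rewrite mxE (negPf hp) andbF mulr0.
Qed.

Lemma SO_mul (R : realType) n (A B : 'M[R]_n) : A \in SOmx R n -> B \in SOmx R n ->
  A *m B \in SOmx R n.
Proof.
rewrite !inE => /andP[/eqP oA /eqP dA] /andP[/eqP oB /eqP dB].
rewrite det_mulmx dA dB mulr1 eqxx andbT trmx_mul mulmxA -(mulmxA _ A^T) oA mulmx1 oB.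
by [].
Qed.



Section FF.
Variables (R : realType) (n N M : nat) (Lam : 'M[R]_n) (Q0 : 'I_M -> 'M[R]_n)
  (phi : 'M[R]_n -> R) (U : 'I_N -> 'M[R]_n) (k : 'I_N) (S D : 'M[R]_n).

Definition Prk := Pr U k.+1 (N - k.+1).
Definition va a := traj (Q0 a) U k *m U k *m S *m Prk.
Definition wa a := traj (Q0 a) U k *m U k *m D *m Prk.
Definition QN a := traj (Q0 a) U N.
Definition FF (s u : R) := Vhat Lam phi Q0 (Umod U k (1%:M + s *: S + u *: D)).

Lemma mulT (A : 'M[R]_n) s u : A *m (1%:M + s *: S + u *: D) = A + s *: (A *m S) + u *: (A *m D).
Proof. by rewrite (mulmxDr A) (mulmxDr A) mulmx1 -(scalemxAr s) -(scalemxAr u). Qed.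

Lemma FF_eq s u : FF s u = Vhat Lam phi Q0 U + s * \tr (Lam *m (U k *m S))
  + u * \tr (Lam *m (U k *m D))
  + \sum_a (phi (QN a + s *: va a + u *: wa a) - phi (QN a)).
Proof.
rewrite /FF /Vhat.
have cost : forall l, \tr (Lam *m Umod U k (1%:M + s *: S + u *: D) l) =
   \tr (Lam *m U l) + (if l == k then s * \tr (Lam *m (U k *m S))
        + u * \tr (Lam *m (U k *m D)) else 0).
  move=> l; rewrite /Umod; case: eqP => [->|_]; last by rewrite addr0.
  rewrite mulT (mulmxDr Lam) (mulmxDr Lam) -(scalemxAr s) -(scalemxAr u) !mxtraceD !mxtraceZ.
  by rewrite addrA.
under eq_bigr => l _ do rewrite cost.
rewrite big_split /= -big_mkcond big_pred1_eq.
have term : forall a, phi (traj (Q0 a) (Umod U k (1%:M + s *: S + u *: D)) N)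
   = phi (QN a + s *: va a + u *: wa a).
  move=> a; congr phi; rewrite traj_mod /QN (traj_N _ _ k) /va /wa /Prk.
  by rewrite !mulmxDr !mulmxDl mulmx1 -!scalemxAr -!scalemxAl !mulmxA.
rewrite (eq_bigr _ (fun a _ => term a)).
rewrite sumrB; ring.
Qed.


Hypotheses (df : forall x z, derivable phi x z) (cf : forall z, continuous ('D_z phi)).

Definition L1 := \tr (Lam *m (U k *m S)) + \sum_a 'D_(va a) phi (QN a).
Definition L2 := \tr (Lam *m (U k *m D)) + \sum_a 'D_(wa a) phi (QN a).

Lemma FF_est : (0 < M)%N -> forall e : R, 0 < e -> exists2 d : R, 0 < d &
  forall s u : R, `|s| < d -> `|u| < d ->
  `|FF s u - Vhat Lam phi Q0 U - s * L1 - u * L2| <= e * (`|s| + `|u|).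
Proof.
move=> hM e e0.
have M0 : 0 < (M%:R : R) by rewrite ltr0n.
set e' := e / M%:R.
have e'0 : 0 < e' by rewrite divr_gt0.
set Ea := fun a s u => phi (QN a + s *: va a + u *: wa a) - phi (QN a)
   - s * 'D_(va a) phi (QN a) - u * 'D_(wa a) phi (QN a).
have [d d0 hd] := @fin_delta R _ (fun a d => forall s u : R, `|s| < d -> `|u| < d ->
   `|Ea a s u| <= e' * (`|s| + `|u|))
  (fun a d d' _ hdd' H s u hs hu => H s u (lt_le_trans hs hdd') (lt_le_trans hu hdd'))
  (fun a => est2 df (@cf (va a) (QN a)) (@cf (wa a) (QN a)) e'0).
exists d => // s u hs hu.
have E : \sum_a Ea a s u = \sum_a (phi (QN a + s *: va a + u *: wa a) - phi (QN a))
   - s * \sum_a 'D_(va a) phi (QN a) - u * \sum_a 'D_(wa a) phi (QN a).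
  by rewrite /Ea sumrB [X in X - _]sumrB !mulr_sumr.
suff -> : FF s u - Vhat Lam phi Q0 U - s * L1 - u * L2 = \sum_a Ea a s u.
  apply: (le_trans (ler_norm_sum _ _ _)).
  apply: (@le_trans _ _ (\sum_(a < M) e' * (`|s| + `|u|))).
    by apply: ler_sum => a _; exact: hd.
  rewrite sumr_const card_ord -mulr_natr /e' mulrAC divfK //.
  by rewrite gt_eqF.
by rewrite E FF_eq /L1 /L2; ring.
Qed.

End FF.


Unset Implicit Arguments. Set Strict Implicit.

Theorem theorem2p6 (R : realType) (n N M : nat)
  (hn : (2 <= n)%N) (hN : (1 <= N)%N) (hM : (1 <= M)%N)
  (Lam : 'M[R]_n) (hLdiag : is_diag_mx Lam) (hLpos : forall i, 0 < Lam i i)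
  (Q0 : 'I_M -> 'M[R]_n) (hQ0 : forall a, Q0 a \in SOmx R n)
  (phi : 'M[R]_n -> R) (hphi0 : forall A, 0 <= phi A) (hphi : smooth_fun phi)
  (U : 'I_N -> 'M[R]_n) (hmin : local_min_SO Lam phi Q0 U) :
  exists P : 'I_M -> nat -> 'M[R]_n,
    (forall (a : 'I_M) (k : 'I_N),
        traj (Q0 a) U k.+1 = traj (Q0 a) U k *m U k /\
        P a k.+1 = P a k *m U k) /\
    (forall k : 'I_N,
        U k *m Lam - Lam *m (U k)^T =
        \sum_(a < M) ((traj (Q0 a) U k)^T *m P a k - (P a k)^T *m traj (Q0 a) U k)) /\
    (forall a : 'I_M, P a N = grad phi (traj (Q0 a) U N)).
Proof.
have [hSO [eps eps0 hloc]] := hmin.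
have df : forall x z, derivable phi x z := fun x z => (hphi [::]).2 z x.
have cf : forall z, continuous ('D_z phi) := fun z => (hphi [:: z]).1.
have hU : forall k, (U k)^T *m U k = 1%:M.
  by move=> k; have := hSO k; rewrite inE => /andP[/eqP -> _].
have hU' : forall k, U k *m (U k)^T = 1%:M by move=> k; apply: mulmx1C.
set G := fun a => grad phi (traj (Q0 a) U N).
set P := fun (a : 'I_M) (m : nat) => G a *m (Pr U m (N - m))^T.
have hQ : forall a (k : 'I_N), traj (Q0 a) U k.+1 = traj (Q0 a) U k *m U k.
  by move=> a k; rewrite /= ctrl_ord.
have hP : forall a (k : 'I_N), P a k.+1 = P a k *m U k.
  move=> a k; rewrite /P.
  have hk : (N - k = (N - k.+1).+1)%N by rewrite subnSK.
  by rewrite hk PrSl ctrl_ord trmx_mul -!mulmxA hU mulmx1.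
exists P; split; [by move=> a k; split | split]; last first.
  by move=> a; rewrite /P subnn /= trmx1 mulmx1.
move=> k.
set X := Lam *m U k + \sum_a (P a k.+1)^T *m traj (Q0 a) U k.+1.
have claim : forall i j : 'I_n, i != j -> 0 <= \tr (X *m Sm R i j).
  move=> i j hij.
  set S := Sm R i j; set D := Dm R i j.
  have SS := Sm_Sm R hij; have SD := Sm_Dm R hij; have DS := Dm_Sm R hij.
  have DD := Dm_Dm R hij; have StN := Sm_tr R i j; have DtD := Dm_tr R i j.
  set A := U k *m S; set B := U k *m D.
  set K := `|A| + `|B|.
  have K0 : 0 <= K by rewrite /K addr_ge0.
  set t0 := eps / (2 * K + 1).
  have K1 : 0 < 2 * K + 1 by rewrite ltr_wpDl // mulr_ge0.
  have t00 : 0 < t0 by rewrite divr_gt0.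
  have t0e : t0 * (2 * K + 1) = eps by rewrite /t0 divfK // gt_eqF.
  have hL : 0 <= L1 Lam Q0 phi U k S.
    apply: (neg_contra (F := FF Lam Q0 phi U k S D) (F0 := Vhat Lam phi Q0 U)
      (L2 := L2 Lam Q0 phi U k D) t00).
      exact: (FF_est Lam Q0 U k S D df cf hM).
    move=> a c a0 at0 hc hc0.
    rewrite /FF -(Tm_mul SS SD DS DD a a c c).
    apply: hloc.
    - move=> l; rewrite /Umod; case: eqP => _; last exact: hSO.
      exact: SO_mul (hSO k) (Tm_SO StN DtD SS SD DS DD hc).
    - move=> l; rewrite /Umod; case: eqP => [->|_]; last by rewrite subrr normr0.
      rewrite (Tm_mul SS SD DS DD a a c c) mulT addrAC [U k + _ - U k]addrAC subrr add0r.
      apply: (le_lt_trans (ler_normD _ _)); rewrite !normrZ.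
      have a1 : a <= 1 by nra.
      have hs : `|a + a + a * c + c * a| <= 2 * a.
        rewrite ger0_norm; nra.
      have ue : c + c - a * a + c * c = - 2 * a ^+ 2 by nra.
      have hu : `|c + c - a * a + c * c| <= 2 * a.
        rewrite ue ler0_norm; nra.
      have := normr_ge0 A; have := normr_ge0 B.
      rewrite /K in K0 t0e; nra.
  suff <- : L1 Lam Q0 phi U k S = \tr (X *m S) by [].
  rewrite /L1 /X mulmxDl mxtraceD -mulmxA; congr (_ + _).
  rewrite mulmx_suml raddf_sum; apply: eq_bigr => a _.
  rewrite (D_grad df cf) /va /QN /Prk /P trmx_mul trmxK hQ.
  by rewrite !mulmxA mxtrace_mulC !mulmxA.
have sym : X^T = X.
  apply/matrixP => i j; rewrite mxE.
  case: (eqVneq i j) => [-> //|hij].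
  have hji : j != i by rewrite eq_sym.
  have h1 := claim i j hij; have h2 := claim j i hji.
  have e1 : \tr (X *m Sm R i j) = X j i - X i j by rewrite /Sm mulmxBr raddfB /= !tr_delta.
  have e2 : \tr (X *m Sm R j i) = X i j - X j i by rewrite /Sm mulmxBr raddfB /= !tr_delta.
  rewrite e1 in h1; rewrite e2 in h2; lra.
have LamT : Lam^T = Lam.
  apply/matrixP => i j; rewrite mxE.
  case: (eqVneq i j) => [-> //|hij].
  have hji : j != i by rewrite eq_sym.
  have d1 : Lam i j = 0.
    by move/forallP/(_ i)/forallP/(_ j)/implyP: hLdiag => /(_ hij) /eqP.
  have d2 : Lam j i = 0.
    by move/forallP/(_ j)/forallP/(_ i)/implyP: hLdiag => /(_ hji) /eqP.
  by rewrite d1 d2.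
set Y := \sum_a (traj (Q0 a) U k)^T *m P a k.
set Z := \sum_a (P a k)^T *m traj (Q0 a) U k.
have hX : X = Lam *m U k + (U k)^T *m Z *m U k.
  rewrite /X /Z; congr (_ + _); rewrite mulmx_sumr mulmx_suml; apply: eq_bigr => a _.
  by rewrite hP hQ trmx_mul !mulmxA.
have hZ : Z^T = Y.
  by rewrite /Z /Y linear_sum; apply: eq_bigr => a _; rewrite /= trmx_mul trmxK.
have E : (U k)^T *m Lam + (U k)^T *m Y *m U k = Lam *m U k + (U k)^T *m Z *m U k.
  rewrite -hX -[in RHS]sym hX linearD /= !trmx_mul LamT trmxK hZ mulmxA.
  by [].
have E2 := congr1 (fun W => U k *m W *m (U k)^T) E.
move: E2 => /=.
rewrite !mulmxDr !mulmxDl !mulmxA hU' !mul1mx -(mulmxA Y) hU' mulmx1.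
rewrite -(mulmxA (U k *m Lam)) hU' mulmx1 -(mulmxA Z) hU' mulmx1 => E2.
rewrite sumrB -/Y -/Z.
apply/eqP; rewrite subr_eq addrAC [Y + _]addrC E2 addrK eqxx.
by [].
Qed.
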